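(* Let $R$ be a GCD-domain. Let $s_1,\dots,s_n\in(\operatorname{Sqf} R)\setminus R^{\ast}$ and $t_1,\dots,t_m\in(\operatorname{Sqf} R)\setminus R^{\ast}$ (with $n,m\geqslant 1$), let $k_1<k_2<\dots<k_n$ and $l_1<l_2<\dots<l_m$ be non-negative integers, and let $c,d\in R^{\ast}$. If $$c\,s_n^{2^{k_n}}s_{n-1}^{2^{k_{n-1}}}\cdots s_2^{2^{k_2}}s_1^{2^{k_1}}=d\,t_m^{2^{l_m}}t_{m-1}^{2^{l_{m-1}}}\cdots t_2^{2^{l_2}}t_1^{2^{l_1}},$$ then $n=m$, and $s_i\sim t_i$ and $k_i=l_i$ for $i=1,\dots,n$.
   Context: A GCD-domain is a commutative ring with identity without zero divisors in which the intersection of any two principal ideals is principal. $R^{\ast}$ denotes the set of invertible elements of $R$; $a\sim b$ means $a$ and $b$ are associated. An element $a\in R$ is square-free if it cannot be written as $a=b^2c$ with $b\in R\setminus R^{\ast}$ and $c\in R$; $\operatorname{Sqf} R$ denotes the set of square-free elements of $R$. *)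

(* Defs.v *)
From mathcomp Require Import all_boot all_order all_algebra.
Set Implicit Arguments. Unset Strict Implicit. Unset Printing Implicit Defensive.
Import GRing.Theory.
Local Open Scope ring_scope.

Definition rdvd (R : comRingType) (a b : R) : Prop := exists c : R, b = c * a.

(* R is a GCD-domain: the intersection of any two principal ideals is principal,
   i.e. aR ∩ bR = cR for some c. *)
Definition is_GCD_domain (R : idomainType) : Prop :=
  forall a b : R, exists c : R, forall x : R, (rdvd a x /\ rdvd b x) <-> rdvd c x.

Definition associated (R : comUnitRingType) (a b : R) : Prop :=
  exists u : R, u \is a GRing.unit /\ a = u * b.

Definition square_free (R : comUnitRingType) (a : R) : Prop :=
  ~ (exists b c : R, b \isn't a GRing.unit /\ a = b ^+ 2 * c).

(* Main.v *)
Require Import Defs.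
From mathcomp Require Import all_boot all_order all_algebra.
From mathcomp Require Import ring zify.
Import GRing.Theory.
Local Open Scope ring_scope.
Set Implicit Arguments. Unset Strict Implicit.

Section G.
Variable R : idomainType.
Hypothesis hR : is_GCD_domain R.

Definition cop (a b : R) := forall h, rdvd h a -> rdvd h b -> h \is a GRing.unit.

Lemma unit_of (h q : R) : h * q = 1 -> h \is a GRing.unit.
Proof. by move=> e; apply/unitrP; exists q; rewrite mulrC e. Qed.

Lemma gcd_decomp (Y Z : R) : Y != 0 -> Z != 0 ->
  exists g y z, Y = g * y /\ Z = g * z /\ cop y z.
Proof.
move=> hY hZ; have [L hL] := hR Y Z.
have [[L1 e1] [L2 e2]] : rdvd Y L /\ rdvd Z L by apply/hL; exists 1; rewrite mul1r.
have [g eg] : rdvd L (Y * Z) by apply/hL; split; [exists Z; rewrite mulrC|exists Y].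
have hYZ : Y * Z != 0 by rewrite mulf_neq0.
have hL0 : L != 0 by apply: contraNneq hYZ => h; rewrite eg h mulr0.
exists g, L2, L1; split; [|split].
- apply: (mulIf hZ); rewrite eg e2; ring.
- apply: (mulfI hY); rewrite eg e1; ring.
move=> h [u eu] [v ev].
have E : Y = g * u * h by apply: (mulIf hZ); rewrite eg e2 eu; ring.
have F : Z = g * v * h by apply: (mulfI hY); rewrite eg e1 ev; ring.
have [q eq] : rdvd L (g * h * u * v).
  apply/hL; split.
  + by exists v; rewrite E; ring.
  + by exists u; rewrite F; ring.
apply: (@unit_of h q); apply: (mulIf hL0); rewrite mul1r.
rewrite {2}e1 E ev.
have -> : v * h * (g * u * h) = h * (g * h * u * v) by ring.
rewrite eq; ring.
Qed.

Lemma coprime_dvd (a b c : R) : a != 0 -> b != 0 -> cop a b ->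
  rdvd a (b * c) -> rdvd a c.
Proof.
move=> ha hb hc [r er]; have [L hL] := hR a b.
have [[L1 e1] [L2 e2]] : rdvd a L /\ rdvd b L by apply/hL; exists 1; rewrite mul1r.
have [g eg] : rdvd L (a * b) by apply/hL; split; [exists b; rewrite mulrC|exists a].
have ga : a = g * L2 by apply: (mulIf hb); rewrite eg e2; ring.
have gb : b = g * L1 by apply: (mulfI ha); rewrite eg e1; ring.
have gu : g \is a GRing.unit by apply: hc; [exists L2; rewrite mulrC|exists L1; rewrite mulrC].
have [q eq] : rdvd L (b * c) by apply/hL; split; [exists r | exists c; rewrite mulrC].
have H : g * c = q * a.
  apply: (mulIf hb); transitivity (g * (b * c)); first ring.
  rewrite eq; transitivity (q * (a * b)); last ring.
  rewrite eg; ring.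
by exists (g^-1 * q); rewrite -mulrA -H mulrA mulVr // mul1r.
Qed.

Lemma sqf_ne0 (a : R) : square_free a -> a != 0.
Proof.
move=> h; apply/eqP=> a0; apply: h; exists 0, 0; rewrite unitr0 a0; split=> //.
by rewrite mulr0.
Qed.

Lemma sqf_unit (a y c : R) : square_free a -> a = y ^+ 2 * c -> y \is a GRing.unit.
Proof. by move=> h e; apply/negPn/negP=> hy; apply: h; exists y, c. Qed.

Lemma sqf1 : square_free (1 : R).
Proof.
move=> [b [c [hb e]]]; case/negP: hb; apply: (@unit_of b (b * c)).
by rewrite e expr2 mulrA.
Qed.

Lemma cop_sym (y z : R) : cop y z -> cop z y.
Proof. by move=> h x h1 h2; apply: h. Qed.

Lemma sq_div (y z c : R) : y != 0 -> z != 0 -> cop y z ->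
  rdvd (y ^+ 2) (z ^+ 2 * c) -> rdvd (y ^+ 2) c.
Proof.
move=> hy hz hc [r er].
have [c1 e1] : rdvd y c.
  apply: (coprime_dvd hy hz hc); apply: (coprime_dvd hy hz hc).
  by exists (r * y); rewrite mulrA -expr2 er; ring.
have [c2 e2] : rdvd y c1.
  apply: (coprime_dvd hy hz hc); apply: (coprime_dvd hy hz hc).
  exists r; apply: (mulIf hy); transitivity (z ^+ 2 * c); first by rewrite e1; ring.
  by rewrite er; ring.
by exists c2; rewrite e1 e2 expr2 mulrA.
Qed.

Lemma keyL (a b Y Z u : R) : square_free a -> square_free b -> Y != 0 -> Z != 0 ->
  u \is a GRing.unit -> a * Y ^+ 2 = u * (b * Z ^+ 2) ->
  (exists v, v \is a GRing.unit /\ a = v * b) /\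
  (exists w, w \is a GRing.unit /\ Y = w * Z).
Proof.
move=> ha hb hY hZ hu e.
have [g [y [z [eY [eZ hc]]]]] := gcd_decomp hY hZ.
have hg : g != 0 by apply: contraNneq hY => h; rewrite eY h mul0r.
have hy : y != 0 by apply: contraNneq hY => h; rewrite eY h mulr0.
have hz : z != 0 by apply: contraNneq hZ => h; rewrite eZ h mulr0.
have e' : a * y ^+ 2 = u * (b * z ^+ 2).
  apply: (mulIf (x := g ^+ 2)); first by rewrite expf_neq0.
  transitivity (a * Y ^+ 2); first by rewrite eY; ring.
  by rewrite e eZ; ring.
have yu : y \is a GRing.unit.
  have [c2 e2] : rdvd (y ^+ 2) (u * b).
    apply: (sq_div hy hz hc); exists a; rewrite e'; ring.
  apply: (@sqf_unit b y (u^-1 * c2)) => //.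
  by rewrite -[b](mulKr hu) e2; ring.
have zu : z \is a GRing.unit.
  have [c2 e2] : rdvd (z ^+ 2) (u^-1 * a).
    apply: (sq_div hz hy (cop_sym hc)); exists b.
    transitivity (u^-1 * (a * y ^+ 2)); first ring.
    by rewrite e' mulKr // mulrC.
  apply: (@sqf_unit a z (u * c2)) => //.
  by rewrite -[a](mulVKr hu) e2; ring.
split.
- exists (u * z ^+ 2 * (y ^+ 2)^-1); split.
    by rewrite !unitrM hu unitrV !expr2 !unitrM zu yu.
  apply: (mulIf (x := y ^+ 2)); first by rewrite expf_neq0.
  rewrite e'; transitivity (u * z ^+ 2 * b * ((y ^+ 2)^-1 * y ^+ 2)); last ring.
  by rewrite mulVr ?mulr1 ?unitrX_pos //; ring.
- exists (y * z^-1); split; first by rewrite unitrM yu unitrV.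
  rewrite eY eZ; transitivity (y * g * (z^-1 * z)); last ring.
  by rewrite mulVr ?mulr1 //; ring.
Qed.

Definition P (s : nat -> R) (k : nat -> nat) n := \prod_(i < n) s i ^+ (2 ^ k i).

Lemma Proot s k n e : (forall i, (i < n)%N -> (e <= k i)%N) ->
  P s k n = (P s (fun i => k i - e)%N n) ^+ (2 ^ e).
Proof.
move=> h; rewrite /P -prodrXl; apply: eq_bigr => i _.
by rewrite -exprM -expnD subnK // h.
Qed.

Lemma Psplit s k n :
  P s k n.+1 = s 0%N ^+ (2 ^ k 0%N) * P (fun i => s i.+1) (fun i => k i.+1) n.
Proof. by rewrite /P big_ord_recl. Qed.

Lemma P0 s k : P s k 0 = 1.
Proof. by rewrite /P big_ord0. Qed.

Lemma Pne0 s k n : (forall i, (i < n)%N -> s i != 0) -> P s k n != 0.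
Proof.
move=> h; rewrite /P; apply: (big_ind (fun x : R => x != 0)).
- exact: oner_neq0.
- by move=> x y hx hy; rewrite mulf_neq0.
- by move=> i _; rewrite expf_neq0 // h.
Qed.

Lemma root (e : nat) : forall (x w u : R), x != 0 -> w != 0 -> u \is a GRing.unit ->
  x ^+ (2 ^ e) = u * w ^+ (2 ^ e) -> exists v, v \is a GRing.unit /\ x = v * w.
Proof.
elim: e => [|e IH] x w u hx hw hu E.
  by exists u; split=> //; rewrite expn0 !expr1 in E.
rewrite expnS !exprM in E.
have [v [hv ev]] := IH _ _ _ (expf_neq0 2 hx) (expf_neq0 2 hw) hu E.
have := @keyL 1 1 x w v sqf1 sqf1 hx hw hv.
by rewrite !mul1r => /(_ ev) [].
Qed.

Lemma main n : forall m (s t : nat -> R) (k l : nat -> nat) (u : R),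
  u \is a GRing.unit ->
  (forall i, (i < n)%N -> square_free (s i) /\ s i \isn't a GRing.unit) ->
  (forall j, (j < m)%N -> square_free (t j) /\ t j \isn't a GRing.unit) ->
  (forall i j, (i < j < n)%N -> (k i < k j)%N) ->
  (forall i j, (i < j < m)%N -> (l i < l j)%N) ->
  P s k n = u * P t l m ->
  n = m /\ (forall i, (i < n)%N -> associated (s i) (t i) /\ k i = l i).
Proof.
elim/ltn_ind: n => n IH m s t k l u hu hs ht hk hl E.
case: n IH hs hk E => [|n] IH hs hk E.
  case: m ht hl E => [|m] ht hl E; first by split.
  exfalso.
  have : u * P t l m.+1 \is a GRing.unit by rewrite -E P0 unitr1.
  rewrite Psplit !unitrM unitrX_pos ?expn_gt0 //; case/and3P => _ h _.
  by case/negP: (ht 0%N isT).2.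
case: m ht hl E => [|m] ht hl E.
  exfalso.
  have : P s k n.+1 \is a GRing.unit by rewrite E P0 mulr1.
  rewrite Psplit !unitrM unitrX_pos ?expn_gt0 //; case/andP => h _.
  by case/negP: (hs 0%N isT).2.
set e0 := minn (k 0%N) (l 0%N).
have hk0 : forall i, (i < n.+1)%N -> (k 0%N <= k i)%N.
  by case=> [|i] // hi; apply: ltnW; apply: hk.
have hl0 : forall i, (i < m.+1)%N -> (l 0%N <= l i)%N.
  by case=> [|i] // hi; apply: ltnW; apply: hl.
have hk1 : forall i, (i < n)%N -> (k 0%N < k i.+1)%N by move=> i hi; apply: hk.
have hl1 : forall i, (i < m)%N -> (l 0%N < l i.+1)%N by move=> i hi; apply: hl.
have e0k : (e0 <= k 0%N)%N by apply: geq_minl.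
have e0l : (e0 <= l 0%N)%N by apply: geq_minr.
have sne : forall i, (i < n.+1)%N -> s i != 0 by move=> i hi; apply: sqf_ne0; case: (hs i hi).
have tne : forall i, (i < m.+1)%N -> t i != 0 by move=> i hi; apply: sqf_ne0; case: (ht i hi).
have [v [hv ev]] : exists v, v \is a GRing.unit /\
    P s (fun i => k i - e0)%N n.+1 = v * P t (fun i => l i - e0)%N m.+1.
  apply: (@root e0); [exact: Pne0 | exact: Pne0 | exact: hu |].
  rewrite -!Proot //.
  - by move=> i hi; apply: leq_trans e0l (hl0 i hi).
  - by move=> i hi; apply: leq_trans e0k (hk0 i hi).
have splitS : P s (fun i => k i - e0)%N n.+1 = s 0%N ^+ (2 ^ (k 0%N - e0)) *
    (P (fun i => s i.+1) (fun i => k i.+1 - e0 - 1)%N n) ^+ 2.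
  rewrite Psplit (@Proot _ _ _ 1) // => i hi; have := hk1 i hi; lia.
have splitT : P t (fun i => l i - e0)%N m.+1 = t 0%N ^+ (2 ^ (l 0%N - e0)) *
    (P (fun i => t i.+1) (fun i => l i.+1 - e0 - 1)%N m) ^+ 2.
  rewrite Psplit (@Proot _ _ _ 1) // => i hi; have := hl1 i hi; lia.
have YS : P (fun i => s i.+1) (fun i => k i.+1 - e0 - 1)%N n != 0.
  by apply: Pne0 => i hi; apply: sne.
have ZT : P (fun i => t i.+1) (fun i => l i.+1 - e0 - 1)%N m != 0.
  by apply: Pne0 => i hi; apply: tne.
have [ke|kne] := eqVneq (k 0%N) e0; have [le|lne] := eqVneq (l 0%N) e0.
- rewrite splitS splitT ke le subnn expn0 !expr1 in ev.
  have [[a0 [ha0 ea0]] [w [hw ew]]] :=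
    keyL (hs 0%N isT).1 (ht 0%N isT).1 YS ZT hv ev.
  have hk' : forall i j, (i < j < n)%N -> (k i.+1 - e0 - 1 < k j.+1 - e0 - 1)%N.
    move=> i j /andP [hij hj].
    have := hk i.+1 j.+1; have := hk1 i (ltn_trans hij hj); rewrite ltnS hij /=.
    move=> a /(_ hj); lia.
  have hl' : forall i j, (i < j < m)%N -> (l i.+1 - e0 - 1 < l j.+1 - e0 - 1)%N.
    move=> i j /andP [hij hj].
    have := hl i.+1 j.+1; have := hl1 i (ltn_trans hij hj); rewrite ltnS hij /=.
    move=> a /(_ hj); lia.
  have [nm H] := IH n (ltnSn n) m (fun i => s i.+1) (fun i => t i.+1)
    (fun i => k i.+1 - e0 - 1)%N (fun i => l i.+1 - e0 - 1)%N w hw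
    (fun i hi => hs i.+1 hi) (fun i hi => ht i.+1 hi) hk' hl' ew.
  split; first by rewrite nm.
  case=> [|i] hi; first by split; [exists a0 | rewrite ke le].
  have [H1 H2] := H i hi; split=> //.
  have := hk1 i hi; have := hl1 i; rewrite -nm => /(_ hi); lia.
- exfalso.
  have splitT' : P t (fun i => l i - e0)%N m.+1 =
      (P t (fun i => l i - e0 - 1)%N m.+1) ^+ 2.
    rewrite (@Proot _ _ _ 1) // => i hi; have := hl0 i hi; move: lne; lia.
  rewrite splitS splitT' ke subnn expn0 expr1 in ev.
  rewrite -[X in _ = v * X]mul1r in ev.
  have [[a0 [ha0 ea0]] _] := keyL (hs 0%N isT).1 sqf1 YS (Pne0 _ tne) hv ev.
  case/negP: (hs 0%N isT).2; by rewrite ea0 mulr1.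
- have splitS' : P s (fun i => k i - e0)%N n.+1 =
      (P s (fun i => k i - e0 - 1)%N n.+1) ^+ 2.
    rewrite (@Proot _ _ _ 1) // => i hi; have := hk0 i hi; move: kne; lia.
  rewrite splitS' splitT le subnn expn0 expr1 in ev.
  rewrite -[X in X = _]mul1r in ev.
  have [[a0 [ha0 ea0]] _] := keyL sqf1 (ht 0%N isT).1 (Pne0 _ sne) ZT hv ev.
  case/negP: (ht 0%N isT).2; apply: (@unit_of _ a0); by rewrite mulrC -ea0.
- exfalso; move: kne lne; rewrite /e0 /minn; case: ltnP => _; rewrite eqxx //.
Qed.
End G.

Unset Implicit Arguments.

(* Sequences s_1..s_n, k_1..k_n are encoded as s 0 .. s (n-1), k 0 .. k (n-1). *)
Theorem proposition2 (R : idomainType) (hR : is_GCD_domain R)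
  (n m : nat) (s t : nat -> R) (k l : nat -> nat) (c d : R)
  (hn : (1 <= n)%N) (hm : (1 <= m)%N)
  (hs : forall i, (i < n)%N -> square_free (s i) /\ s i \isn't a GRing.unit)
  (ht : forall j, (j < m)%N -> square_free (t j) /\ t j \isn't a GRing.unit)
  (hk : forall i j, (i < j < n)%N -> (k i < k j)%N)
  (hl : forall i j, (i < j < m)%N -> (l i < l j)%N)
  (hc : c \is a GRing.unit) (hd : d \is a GRing.unit)
  (heq : c * \prod_(i < n) s i ^+ (2 ^ k i) = d * \prod_(j < m) t j ^+ (2 ^ l j)) :
  n = m /\ (forall i, (i < n)%N -> associated (s i) (t i) /\ k i = l i).
Proof.
apply: (@main R hR n m s t k l (c^-1 * d)) => //.
- by rewrite unitrM unitrV hc hd.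
- by rewrite /P -mulrA -heq mulKr.
Qed.
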